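(* Let $M_{1/2} := \mathbb{N}_0[\frac12]$. If an irreducible polynomial $P(x) \in \mathbb{Z}[x]$ is not atomic in the monoid algebra $\mathbb{Q}[M_{1/2}]$, then $P(x)$ has a splitting sequence whose binary string contains infinitely many copies of $S$.
   Context: $\mathbb{Q}[M_{1/2}]$ is the domain of polynomial expressions with rational coefficients and nonnegative dyadic rational exponents; an element is atomic if it is a unit or a finite product of irreducibles. Splitting sequence: for an irreducible $P(x) \in \mathbb{Z}[x]$, a sequence $(P_n(x))_{n \ge 0}$ in $\mathbb{Z}[x]$ with $P_0 = P$ such that for each $n \ge 0$: if $P_n$ is irreducible in $\mathbb{Z}[x]$, then $P_{n+1}(x) = P_n(x^2)$ (the square lifting); if $P_n$ is reducible, then (as $n \ge 1$, $P_{n-1}$ is irreducible and $P_n(x) = P_{n-1}(x^2)$, which factors in $\mathbb{Z}[x]$ as a product of exactly two irreducible polynomials) $P_{n+1}$ is one of these two irreducible factors (a splitting of $P_n$). The binary string of the sequence is $s_0 s_1 s_2 \ldots$ where $s_n = L$ if $P_n$ is irreducible in $\mathbb{Z}[x]$ and $s_n = S$ otherwise. *)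

(* Defs.v *)
From HB Require Import structures.
From mathcomp Require Import all_boot all_order all_algebra.
Set Implicit Arguments. Unset Strict Implicit. Unset Printing Implicit Defensive.
Import Order.TTheory GRing.Theory Num.Theory.
Local Open Scope ring_scope.

Definition irreducibleZ (p : {poly int}) : Prop :=
  [/\ p != 0, p \isn't a GRing.unit &
      forall q r : {poly int}, p = q * r ->
        q \is a GRing.unit \/ r \is a GRing.unit].

(* An element is represented by a pair (n, p) with p : {poly rat}; it stands
   for p(x^(1/2^n)).  Every element of Q[M_{1/2}] has such a representation,
   and (n, p) and (n+k, p(x^(2^k))) denote the same element. *)
Definition QM := (nat * {poly rat})%type.

Definition liftp (k : nat) (p : {poly rat}) : {poly rat} := p \Po 'X^(2 ^ k).

Definition QM_eq (a b : QM) : Prop :=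
  let N := maxn a.1 b.1 in liftp (N - a.1) a.2 = liftp (N - b.1) b.2.

Definition QM_mul (a b : QM) : QM :=
  let N := maxn a.1 b.1 in (N, liftp (N - a.1) a.2 * liftp (N - b.1) b.2).

Definition QM_one : QM := (0%N, 1).
Definition QM_zero : QM := (0%N, 0).

Definition QM_unit (a : QM) : Prop := exists b, QM_eq (QM_mul a b) QM_one.

Definition QM_irreducible (a : QM) : Prop :=
  [/\ ~ QM_eq a QM_zero, ~ QM_unit a &
      forall b c, QM_eq a (QM_mul b c) -> QM_unit b \/ QM_unit c].

Definition QM_prod (s : seq QM) : QM := foldr QM_mul QM_one s.

Definition QM_atomic (a : QM) : Prop :=
  QM_unit a \/
  exists s : seq QM, (forall i, (i < size s)%N -> QM_irreducible (nth QM_one s i)) /\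
                     QM_eq a (QM_prod s).

Definition QM_of_intpoly (P : {poly int}) : QM := (0%N, map_poly intr P).

Definition splitting_sequence (P : {poly int}) (Ps : nat -> {poly int}) : Prop :=
  Ps 0%N = P /\
  forall n : nat,
    (irreducibleZ (Ps n) -> Ps n.+1 = Ps n \Po 'X^2) /\
    (~ irreducibleZ (Ps n) ->
       exists q r : {poly int}, [/\ irreducibleZ q, irreducibleZ r,
                                    Ps n = q * r & Ps n.+1 = q]).

Definition letter_is_S (Ps : nat -> {poly int}) (n : nat) : Prop :=
  ~ irreducibleZ (Ps n).

(* Main.v *)
Require Import Defs.
From HB Require Import structures.
From mathcomp Require Import all_boot all_order all_algebra.
From mathcomp Require Import zify ring.
From Stdlib Require Import Classical IndefiniteDescription.
Set Implicit Arguments. Unset Strict Implicit. Unset Printing Implicit Defensive.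
Import Order.TTheory GRing.Theory Num.Theory.
Local Open Scope ring_scope.


Lemma liftp0 p : liftp 0 p = p.
Proof. by rewrite /liftp expn0 expr1 comp_polyXr. Qed.

Lemma liftpD a b p : liftp a (liftp b p) = liftp (a + b) p.
Proof.
rewrite /liftp -comp_polyA comp_Xn_poly -exprM -expnD addnC //.
Qed.

Lemma liftpM k p q : liftp k (p * q) = liftp k p * liftp k q.
Proof. by rewrite /liftp comp_polyM. Qed.

Lemma liftpC k c : liftp k c%:P = c%:P.
Proof. by rewrite /liftp comp_polyC. Qed.

Lemma size_X2k k : size ('X^(2 ^ k) : {poly rat}) = (2 ^ k).+1.
Proof. by rewrite size_polyXn. Qed.

Lemma liftp_eq0 k p : (liftp k p == 0) = (p == 0).
Proof. by rewrite /liftp comp_poly_eq0 // size_X2k ltnS expn_gt0. Qed.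

Lemma liftp_inj k : injective (liftp k).
Proof.
move=> p q /eqP; rewrite -subr_eq0 /liftp -comp_polyB -/(liftp k _) liftp_eq0.
by rewrite subr_eq0 => /eqP.
Qed.

Lemma size_liftp k p : (size (liftp k p)).-1 = ((size p).-1 * 2 ^ k)%N.
Proof. by rewrite /liftp size_comp_poly size_X2k. Qed.

Lemma size_liftp1 k p : (size (liftp k p) == 1%N) = (size p == 1%N).
Proof.
have := size_liftp k p; have := liftp_eq0 k p.
rewrite -!size_poly_eq0.
have : (0 < 2 ^ k)%N by rewrite expn_gt0.
move: (2 ^ k)%N => e e0.
case: (size p) => [|[|n]]; case: (size (liftp k p)) => [|[|m]] //= _ /eqP.
move=> h; exfalso; move: h; rewrite eq_sym muln_eq0 /= => /eqP E.
by rewrite E in e0.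
Qed.

Definition lev (a : QM) (M : nat) := liftp (M - a.1) a.2.

Lemma lev_lift a N M : (a.1 <= N)%N -> (N <= M)%N -> lev a M = liftp (M - N) (lev a N).
Proof. by move=> h1 h2; rewrite /lev liftpD; congr liftp; lia. Qed.

Lemma QM_eqP a b : QM_eq a b <-> forall M, (a.1 <= M)%N -> (b.1 <= M)%N -> lev a M = lev b M.
Proof.
split=> [h M h1 h2|h]; last by apply: h; [apply: leq_maxl|apply: leq_maxr].
rewrite (@lev_lift a (maxn a.1 b.1)) ?leq_maxl ?geq_max ?h1 ?h2 //.
rewrite (@lev_lift b (maxn a.1 b.1)) ?leq_maxr ?geq_max ?h1 ?h2 //.
by rewrite /lev h.
Qed.

Lemma QM_eqI a b M : (a.1 <= M)%N -> (b.1 <= M)%N -> lev a M = lev b M -> QM_eq a b.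
Proof.
move=> h1 h2 e; rewrite /QM_eq; apply: (@liftp_inj (M - maxn a.1 b.1)).
rewrite -/(lev a _) -/(lev b _) -!lev_lift ?leq_maxl ?leq_maxr ?geq_max ?h1 ?h2 //.
Qed.

Lemma QM_eq_refl a : QM_eq a a.
Proof. by []. Qed.

Lemma QM_eq_sym a b : QM_eq a b -> QM_eq b a.
Proof. by rewrite /QM_eq maxnC => ->. Qed.

Lemma QM_eq_trans a b c : QM_eq a b -> QM_eq b c -> QM_eq a c.
Proof.
move=> /QM_eqP h1 /QM_eqP h2.
apply: (@QM_eqI _ _ (maxn a.1 (maxn b.1 c.1))); try lia.
rewrite h1 ?h2 //; lia.
Qed.

Lemma lev_mul a b M : (a.1 <= M)%N -> (b.1 <= M)%N ->
  lev (QM_mul a b) M = lev a M * lev b M.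
Proof.
move=> h1 h2; rewrite /lev /QM_mul /= liftpM !liftpD; congr (liftp _ _ * liftp _ _); lia.
Qed.

Lemma QM_mul_eq a b a' b' : QM_eq a a' -> QM_eq b b' -> QM_eq (QM_mul a b) (QM_mul a' b').
Proof.
move=> /QM_eqP h1 /QM_eqP h2.
pose M := maxn (maxn a.1 b.1) (maxn a'.1 b'.1).
apply: (@QM_eqI _ _ M); rewrite /= ?geq_max ?leq_maxl ?leq_maxr //; try lia.
rewrite !lev_mul; try lia. rewrite h1 ?h2 //; lia.
Qed.

Lemma QM_mulC a b : QM_eq (QM_mul a b) (QM_mul b a).
Proof.
have h1 : (a.1 <= maxn a.1 b.1)%N by apply: leq_maxl.
have h2 : (b.1 <= maxn a.1 b.1)%N by apply: leq_maxr.
apply: (@QM_eqI _ _ (maxn a.1 b.1)); rewrite ?geq_max ?h1 ?h2 //.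
by rewrite !lev_mul // mulrC.
Qed.

Lemma QM_mulA a b c : QM_eq (QM_mul (QM_mul a b) c) (QM_mul a (QM_mul b c)).
Proof.
set M := maxn a.1 (maxn b.1 c.1).
have h1 : (a.1 <= M)%N by rewrite /M; lia.
have h2 : (b.1 <= M)%N by rewrite /M; lia.
have h3 : (c.1 <= M)%N by rewrite /M; lia.
have h4 : (maxn a.1 b.1 <= M)%N by rewrite geq_max h1 h2.
have h5 : (maxn b.1 c.1 <= M)%N by rewrite geq_max h3 h2.
apply: (@QM_eqI _ _ M); rewrite ?geq_max ?h1 ?h2 ?h3 ?h4 ?h5 //.
by rewrite !lev_mul // mulrA.
Qed.

Lemma lev_one M : lev QM_one M = 1.
Proof. by rewrite /lev /= -polyC1 liftpC. Qed.

Lemma lev_zero M : lev QM_zero M = 0.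
Proof. by rewrite /lev /= -polyC0 liftpC. Qed.

Lemma QM_mul1 a : QM_eq (QM_mul a QM_one) a.
Proof.
have h : (QM_mul a QM_one).1 = a.1 by rewrite /QM_mul /= maxn0.
apply: (@QM_eqI _ _ a.1); rewrite ?h //.
by rewrite lev_mul // lev_one mulr1.
Qed.

Lemma QM_mul1l a : QM_eq (QM_mul QM_one a) a.
Proof. exact: QM_eq_trans (QM_mulC _ _) (QM_mul1 _). Qed.

Lemma QM_unit_eq a a' : QM_eq a a' -> QM_unit a -> QM_unit a'.
Proof.
move=> e [b hb]; exists b; apply: QM_eq_trans hb.
exact: QM_mul_eq (QM_eq_sym e) (QM_eq_refl b).
Qed.

Lemma QM_irr_eq a a' : QM_eq a a' -> QM_irreducible a -> QM_irreducible a'.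
Proof.
move=> e [h1 h2 h3]; split.
- by move=> h; apply: h1; apply: QM_eq_trans e h.
- by move=> h; apply: h2; apply: QM_unit_eq (QM_eq_sym e) h.
- by move=> b c h; apply: h3; apply: QM_eq_trans e h.
Qed.

Lemma QM_atomic_eq a a' : QM_eq a a' -> QM_atomic a -> QM_atomic a'.
Proof.
move=> e [h|[s [h1 h2]]]; first by left; apply: QM_unit_eq e h.
by right; exists s; split => //; apply: QM_eq_trans (QM_eq_sym e) h2.
Qed.

Lemma QM_prod_cat s t : QM_eq (QM_prod (s ++ t)) (QM_mul (QM_prod s) (QM_prod t)).
Proof.
elim: s => [|x s IH] /=; first exact: QM_eq_sym (QM_mul1l _).
apply: QM_eq_trans (QM_eq_sym (QM_mulA _ _ _)).
exact: QM_mul_eq (QM_eq_refl x) IH.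
Qed.

Lemma QM_atomic_mul a b : QM_atomic a -> QM_atomic b -> ~ QM_unit a -> ~ QM_unit b ->
  QM_atomic (QM_mul a b).
Proof.
move=> [h|[s [hs es]]] [h'|[t [ht et]]] // _ _.
right; exists (s ++ t); split.
  move=> i; rewrite size_cat nth_cat => hi2; case: (ltnP i (size s)) => hi; first exact: hs.
  by apply: ht; lia.
apply: QM_eq_trans (QM_eq_sym (QM_prod_cat _ _)).
exact: QM_mul_eq.
Qed.

Definition sgm (a : QM) : QM := (a.1.+1, a.2).

Lemma lev_sgm a M : lev (sgm a) M.+1 = lev a M.
Proof. by rewrite /lev /sgm /= subSS. Qed.

Lemma sgm_eq a b : QM_eq a b -> QM_eq (sgm a) (sgm b).
Proof.
move=> /QM_eqP h; apply: (@QM_eqI _ _ (maxn a.1 b.1).+1); rewrite /= ?ltnS ?leq_maxl ?leq_maxr //.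
by rewrite !lev_sgm h ?leq_maxl ?leq_maxr.
Qed.

Lemma sgm_eq_inv a b : QM_eq (sgm a) (sgm b) -> QM_eq a b.
Proof.
move=> /QM_eqP h; apply: (@QM_eqI _ _ (maxn a.1 b.1)); rewrite ?leq_maxl ?leq_maxr //.
by rewrite -(lev_sgm a) -(lev_sgm b) h /= ?ltnS ?leq_maxl ?leq_maxr.
Qed.

Lemma sgm_mul a b : sgm (QM_mul a b) = QM_mul (sgm a) (sgm b).
Proof. by rewrite /sgm /QM_mul /= maxnSS !subSS. Qed.

Lemma sgm_one : QM_eq (sgm QM_one) QM_one.
Proof. by apply: (@QM_eqI _ _ 1) => //; rewrite lev_sgm !lev_one. Qed.

Lemma sgm_zero : QM_eq (sgm QM_zero) QM_zero.
Proof. by apply: (@QM_eqI _ _ 1) => //; rewrite lev_sgm !lev_zero. Qed.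

Lemma sgm_surj b : QM_eq (sgm (b.1, liftp 1 b.2)) b.
Proof.
apply: (@QM_eqI _ _ b.1.+1) => //=; last first.
by rewrite lev_sgm /lev /= subnn liftp0 subSn // subnn.
Qed.

Lemma sgm_unit a : QM_unit a -> QM_unit (sgm a).
Proof.
move=> [b hb]; exists (sgm b); rewrite -sgm_mul.
exact: QM_eq_trans (sgm_eq hb) sgm_one.
Qed.

Lemma sgm_unit_inv a : QM_unit (sgm a) -> QM_unit a.
Proof.
move=> [c hc]; set c' := (c.1, liftp 1 c.2); exists c'.
apply: sgm_eq_inv; rewrite sgm_mul.
apply: QM_eq_trans (QM_eq_sym sgm_one).
apply: QM_eq_trans hc; exact: QM_mul_eq (QM_eq_refl _) (sgm_surj c).
Qed.

Lemma sgm_irr a : QM_irreducible a -> QM_irreducible (sgm a).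
Proof.
move=> [h1 h2 h3]; split.
- move=> h; apply: h1; apply: sgm_eq_inv.
  apply: (QM_eq_trans h); exact: (QM_eq_sym sgm_zero).
- by move=> /sgm_unit_inv.
- move=> b c h.
  have e : QM_eq a (QM_mul (b.1, liftp 1 b.2) (c.1, liftp 1 c.2)).
    apply: sgm_eq_inv; rewrite sgm_mul; apply: (QM_eq_trans h).
    exact: QM_mul_eq (QM_eq_sym (sgm_surj b)) (QM_eq_sym (sgm_surj c)).
  case: (h3 _ _ e) => /sgm_unit hu; [left|right]; apply: QM_unit_eq hu; exact: sgm_surj.
Qed.

Lemma sgm_prod s : QM_eq (sgm (QM_prod s)) (QM_prod (map sgm s)).
Proof.
elim: s => [|x s IH] /=; first exact: sgm_one.
rewrite sgm_mul; exact: QM_mul_eq (QM_eq_refl _) IH.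
Qed.

Lemma sgm_atomic a : QM_atomic a -> QM_atomic (sgm a).
Proof.
move=> [h|[s [hs es]]]; first by left; apply: sgm_unit.
right; exists (map sgm s); split.
  move=> i; rewrite size_map => hi; rewrite (nth_map QM_one) //; exact: sgm_irr (hs _ hi).
apply: QM_eq_trans (sgm_prod s); exact: sgm_eq.
Qed.

Lemma atomic_lift1 p : QM_atomic (0%N, liftp 1 p) -> QM_atomic (0%N, p).
Proof. move=> /sgm_atomic; apply: QM_atomic_eq; exact: (sgm_surj (0%N, p)). Qed.


Lemma Q_lemma (F h : {poly rat}) : irreducible_poly F -> h %| F \Po 'X^2 ->
  (1 < size h)%N -> (size F <= size h)%N.
Proof.
move=> irrF dh sh.
have hn0 : h != 0 by rewrite -size_poly_gt0; lia.
set hm := h \Po (- 'X).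
have sX : size (- 'X : {poly rat}) = 2%N by rewrite size_polyN size_polyX.
have hmn0 : hm != 0 by rewrite /hm comp_poly_eq0 ?sX.
have shm : size hm = size h by rewrite /hm size_comp_poly2.
set E := even_poly h; set O := odd_poly h.
set A := E \Po 'X^2; set B := O \Po 'X^2.
have eh : h = A + B * 'X by rewrite /A /B /E /O poly_even_odd.
have ehm : hm = A - B * 'X.
  rewrite /hm {1}eh comp_polyD comp_polyM comp_polyX /A /B -!comp_polyA comp_Xn_poly sqrrN.
  by rewrite mulrN.
set u := E * E - 'X * (O * O).
have eu : u \Po 'X^2 = A * A - 'X^2 * (B * B).
  by rewrite /u comp_polyB !comp_polyM comp_polyX.
have ehu : h * hm = u \Po 'X^2.
  rewrite eu ehm; move: eh; move: (A) (B) => a b ->; rewrite expr2; ring.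
have un0 : u != 0.
  apply: contraTneq (mulf_neq0 hn0 hmn0) => u0; by rewrite ehu u0 comp_poly0 eqxx.
have su : size u = size h.
  have := size_comp_poly u ('X^2); rewrite -ehu size_polyXn size_mul // shm.
  have : (0 < size u)%N by rewrite size_poly_gt0.
  move: sh; rewrite /= muln2 -addnn.
  case: (size u) => [|x] //; case: (size h) => [|y] //=; lia.
have ncop : ~~ coprimep u F.
  apply/negP => /(coprimep_comp_poly ('X^2)) /coprimepP H.
  have := H h; rewrite -ehu dvdp_mulr // => /(_ isT dh) /eqp_size.
  by rewrite size_poly1 => e; move: sh; rewrite e.
case: (irredp_XsubCP irrF (dvdp_gcdr u F)) => [e1|e2].
  by move: ncop; rewrite coprimep_def (eqp_size e1) size_poly1.
have dF : F %| u.
  apply: dvdp_trans (dvdp_gcdl u F).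
  by move: e2; rewrite /eqp => /andP[].
by rewrite -su; apply: dvdp_leq.
Qed.

Lemma unitZ_size (q : {poly int}) : q \is a GRing.unit -> size q = 1%N.
Proof. by rewrite poly_unitE => /andP[/eqP]. Qed.

Lemma polyC_unitZ (c : int) : (c%:P \is a GRing.unit) = (c \is a GRing.unit).
Proof.
rewrite poly_unitE size_polyC coefC /=.
by case: (eqVneq c 0) => [->|]; rewrite ?unitr0.
Qed.

Lemma irrZ_Q (f : {poly int}) : irreducibleZ f -> (1 < size f)%N ->
  irreducible_poly (map_poly (intr : int -> rat) f).
Proof.
move=> [f0 fu fi] sf; split; first by rewrite size_rat_int_poly.
move=> q sq /dvdpP_rat_int [p1 [a a0 eq] [r er]]; subst q.
case: (fi _ _ er) => [/unitZ_size s1|ur].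
  by move: sq; rewrite size_scale // size_rat_int_poly s1.
have sr := unitZ_size ur.
have ec : r = (r`_0)%:P by apply: size1_polyC; rewrite sr.
have c0 : r`_0 != 0.
  by apply: contraTneq ur => e; rewrite ec e unitr0.
rewrite er ec rmorphM /= map_polyC /= mulrC mul_polyC.
have c0' : (r`_0)%:~R != 0 :> rat by rewrite intr_eq0.
rewrite (eqp_trans (eqp_scale _ a0)) //.
by rewrite eqp_sym eqp_scale.
Qed.

Lemma QM_unit_size (a : QM) : QM_unit a -> size a.2 = 1%N.
Proof.
move=> [b /QM_eqP hb].
have h1 : (a.1 <= maxn a.1 b.1)%N by apply: leq_maxl.
have h2 : (b.1 <= maxn a.1 b.1)%N by apply: leq_maxr.
have := hb (maxn a.1 b.1) (leqnn _) (leq0n _).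
rewrite lev_mul // lev_one => e.
have la0 : lev a (maxn a.1 b.1) != 0 by apply/eqP => h; move: e; rewrite h mul0r => /eqP; rewrite eq_sym oner_eq0.
have lb0 : lev b (maxn a.1 b.1) != 0 by apply/eqP => h; move: e; rewrite h mulr0 => /eqP; rewrite eq_sym oner_eq0.
have := size_mul la0 lb0; rewrite e size_poly1.
move: la0 lb0; rewrite -!size_poly_gt0 => p1 p2 e2.
apply/eqP; rewrite -(size_liftp1 (maxn a.1 b.1 - a.1)) -/(lev a _); apply/eqP; move: p1 p2 e2.
move: (size (lev a (maxn a.1 b.1))) (size (lev b (maxn a.1 b.1))) => x y; lia.
Qed.

Lemma size1_unit (a : QM) : size a.2 = 1%N -> QM_unit a.
Proof.
case: a => n p /= s1.
have ep : p = (p`_0)%:P by apply: size1_polyC; rewrite s1.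
have c0 : p`_0 != 0 by apply/eqP => e; move: s1; rewrite ep e size_poly0.
exists (0%N, ((p`_0)^-1)%:P).
have h : (QM_mul (n, p) (0%N, (p`_0)^-1%:P)).1 = n by rewrite /QM_mul /= maxn0.
apply: (@QM_eqI _ _ n); rewrite ?h //.
rewrite lev_mul // lev_one /lev /= subnn liftp0 liftpC {1}ep -polyCM mulfV //.
Qed.

Lemma irr_mul_size (P x y : {poly rat}) : irreducible_poly P -> P = x * y ->
  size x = 1%N \/ size y = 1%N.
Proof.
move=> irrP e.
have P0 := irredp_neq0 irrP.
have x0 : x != 0 by apply: contraTneq P0 => x0; rewrite e x0 mul0r eqxx.
have y0 : y != 0 by apply: contraTneq P0 => y0; rewrite e y0 mulr0 eqxx.
case: (eqVneq (size x) 1%N) => [|sx]; first by left.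
right; have := irrP x sx; rewrite e dvdp_mulr // => /(_ isT) /eqp_size.
rewrite size_mul //; move: x0 y0; rewrite -!size_poly_gt0.
move: (size x) (size y) => m n; lia.
Qed.

Lemma map_lift (Q : {poly int}) k :
  map_poly (intr : int -> rat) (Q \Po 'X^(2 ^ k)) = liftp k (map_poly intr Q).
Proof. by rewrite map_comp_poly /= map_polyXn. Qed.

Lemma even_comp (p : {poly int}) : even_poly (p \Po 'X^2) = p.
Proof.
apply/polyP => i; rewrite coef_even_poly coef_comp_poly_Xn //.
by rewrite -muln2 dvdn_mull ?dvdnn // mulnK.
Qed.


Section TwoFactor.
Variable f : {poly int}.
Hypothesis irrf : irreducibleZ f.
Hypothesis sf : (1 < size f)%N.
Let g := f \Po 'X^2.

Lemma g_size : (size g).-1 = ((size f).-1 * 2)%N.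
Proof. by rewrite /g size_comp_poly size_polyXn. Qed.

Lemma g_neq0 : g != 0.
Proof. by rewrite /g comp_poly_eq0 ?size_polyXn //; case: irrf. Qed.

Lemma cl1 d e : g = d * e -> ~~ (d \is a GRing.unit) -> (1 < size d)%N.
Proof.
move=> ge du; rewrite ltnNge; apply/negP => sd.
have d0 : d != 0 by apply/eqP => d0; move: g_neq0; rewrite ge d0 mul0r eqxx.
have ed : d = (d`_0)%:P by apply: size1_polyC.
have sd1 : size d = 1%N by move: d0; rewrite -size_poly_gt0; lia.
have cu : ~~ (d`_0 \is a GRing.unit) by move: du; rewrite poly_unitE sd1.
have c0 : d`_0 != 0 by apply/eqP => c0; move: d0; rewrite ed c0 eqxx.
have ef : f = (d`_0)%:P * even_poly e.
  have h : even_poly g = f by exact: even_comp.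
  rewrite -h ge {1}ed !mul_polyC; apply/polyP => i.
  by rewrite coef_even_poly !coefZ coef_even_poly.
case: irrf => _ _ /(_ _ _ ef) [].
  by rewrite polyC_unitZ (negPf cu).
move=> /unitZ_size se; move: sf; rewrite ef mul_polyC size_scale // se; lia.
Qed.

Lemma cl2 d e : g = d * e -> (1 < size d)%N -> (size f <= size d)%N.
Proof.
move=> ge sd.
rewrite -(size_rat_int_poly f) -(size_rat_int_poly d).
apply: Q_lemma; first exact: irrZ_Q.
  have h : (map_poly (intr : int -> rat) f) \Po 'X^2 = map_poly intr g.
    by rewrite /g map_comp_poly /= map_polyXn.
  rewrite h ge rmorphM /=; exact: dvdp_mulr.
by rewrite size_rat_int_poly.
Qed.

Lemma cl_irr d e : g = d * e -> ~~ (d \is a GRing.unit) -> size d = size f -> irreducibleZ d.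
Proof.
move=> ge du sd.
have d0 : d != 0 by apply/eqP => d0; move: g_neq0; rewrite ge d0 mul0r eqxx.
split => // a b eab; apply: NNPP => H.
have au : ~~ (a \is a GRing.unit) by apply/negP => h; apply: H; left.
have bu : ~~ (b \is a GRing.unit) by apply/negP => h; apply: H; right.
have a0 : a != 0 by apply/eqP => a0; move: d0; rewrite eab a0 mul0r eqxx.
have b0 : b != 0 by apply/eqP => b0; move: d0; rewrite eab b0 mulr0 eqxx.
have ga : g = a * (b * e) by rewrite ge eab mulrA.
have gb : g = b * (a * e) by rewrite ge eab mulrA (mulrC b).
have sa := cl2 ga (cl1 ga au).
have sb := cl2 gb (cl1 gb bu).
move: sd; rewrite eab size_mul //; move: sf sa sb.
move: (size f) (size a) (size b) => x y z; lia.
Qed.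

Lemma two_factor : ~ irreducibleZ g ->
  exists q r, [/\ irreducibleZ q, irreducibleZ r, g = q * r, (1 < size q)%N & (1 < size r)%N].
Proof.
move=> Hred.
have gu : ~~ (g \is a GRing.unit).
  apply/negP => /unitZ_size sg; have := g_size; rewrite sg /=.
  by move: sf; case: (size f) => [|[|n]].
have [q [r [e [qu ru]]]] : exists q r, g = q * r /\ ~~ (q \is a GRing.unit) /\ ~~ (r \is a GRing.unit).
  apply: NNPP => H; apply: Hred; split => //; first exact: g_neq0.
  move=> q r e; apply: NNPP => H2; apply: H; exists q, r; split => //; split.
    by apply/negP => h; apply: H2; left.
  by apply/negP => h; apply: H2; right.
have e' : g = r * q by rewrite mulrC.
have sq1 := cl1 e qu; have sr1 := cl1 e' ru.
have sq := cl2 e sq1; have sr := cl2 e' sr1.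
have q0 : q != 0 by move: sq1; rewrite -size_poly_gt0; lia.
have r0 : r != 0 by move: sr1; rewrite -size_poly_gt0; lia.
have := g_size; rewrite e size_mul //.
move=> hs.
have eq1 : size q = size f by move: hs sq sr sf; move: (size q) (size r) (size f) => x y z; lia.
have eq2 : size r = size f by move: hs sq sr sf; move: (size q) (size r) (size f) => x y z; lia.
exists q, r; split => //.
  exact: cl_irr e qu eq1.
exact: cl_irr e' ru eq2.
Qed.

End TwoFactor.


Lemma small_atomic (R : {poly int}) : R != 0 -> (size R <= 1)%N -> QM_atomic (QM_of_intpoly R).
Proof.
move=> R0 sR; left; apply: size1_unit => /=; rewrite size_rat_int_poly.
by move: R0; rewrite -size_poly_gt0; move: (size R) sR => x; lia.
Qed.

Lemma nonunit_of (R : {poly int}) : (1 < size R)%N -> ~ QM_unit (QM_of_intpoly R).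
Proof.
move=> sR /QM_unit_size /=; rewrite size_rat_int_poly.
by move: (size R) sR => x; lia.
Qed.

Lemma allirr_atomic (Q : {poly int}) : (forall k, irreducibleZ (Q \Po 'X^(2 ^ k))) ->
  QM_atomic (QM_of_intpoly Q).
Proof.
move=> H.
have irrQ : irreducibleZ Q by have := H 0%N; rewrite expn0 expr1 comp_polyXr.
have Q0 : Q != 0 by case: irrQ.
case: (leqP (size Q) 1) => sQ; first exact: small_atomic.
set F := map_poly (intr : int -> rat) Q.
have sF : size F = size Q by exact: size_rat_int_poly.
right; exists [:: QM_of_intpoly Q]; split; last first.
  apply: QM_eq_sym; exact: QM_mul1.
move=> i /=; rewrite ltnS leqn0 => /eqP -> /=.
split.
- move=> /QM_eqP h; have := h 0%N (leqnn _) (leqnn _).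
  rewrite lev_zero /lev /= liftp0 => /eqP; rewrite -/F -size_poly_eq0 sF.
  by move: (size Q) sQ => x; lia.
- exact: nonunit_of.
- move=> b c /QM_eqP h.
  set N := maxn b.1 c.1.
  have h1 : (b.1 <= N)%N by apply: leq_maxl.
  have h2 : (c.1 <= N)%N by apply: leq_maxr.
  have := h N (leq0n _) (leqnn _); rewrite lev_mul //.
  rewrite /lev /= subn0 -map_lift -!/(lev _ N) => e.
  have sN : (1 < size (Q \Po 'X^(2 ^ N)))%N.
    rewrite -size_rat_int_poly map_lift.
    have := size_liftp N F; rewrite sF.
    have : (0 < 2 ^ N)%N by rewrite expn_gt0.
    move: (size (liftp N F)) (2 ^ N)%N sQ => x y z; nia.
  case: (irr_mul_size (irrZ_Q (H N) sN) e) => [hb|hc].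
    left; apply: size1_unit; apply/eqP; rewrite -(size_liftp1 (N - b.1)); exact/eqP.
  right; apply: size1_unit; apply/eqP; rewrite -(size_liftp1 (N - c.1)); exact/eqP.
Qed.


Definition Inv (R : {poly int}) := ~ QM_atomic (QM_of_intpoly R) /\
  (irreducibleZ R \/ exists q r, [/\ irreducibleZ q, irreducibleZ r, R = q * r,
                                   (1 < size q)%N & (1 < size r)%N]).

Definition Step (R R' : {poly int}) :=
  (irreducibleZ R -> R' = R \Po 'X^2) /\
  (~ irreducibleZ R ->
     exists q r : {poly int}, [/\ irreducibleZ q, irreducibleZ r, R = q * r & R' = q]).

Lemma QM_of_mul (q r : {poly int}) :
  QM_eq (QM_of_intpoly (q * r)) (QM_mul (QM_of_intpoly q) (QM_of_intpoly r)).
Proof.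
apply: (@QM_eqI _ _ 0%N) => //.
by rewrite lev_mul // /lev /= !liftp0 rmorphM.
Qed.

Lemma lift_nonatomic (R : {poly int}) : ~ QM_atomic (QM_of_intpoly R) ->
  ~ QM_atomic (QM_of_intpoly (R \Po 'X^2)).
Proof.
move=> H A; apply: H; apply: atomic_lift1.
have e : map_poly (intr : int -> rat) (R \Po 'X^2) = liftp 1 (map_poly intr R).
  by rewrite -map_lift expn1.
by move: A; rewrite /QM_of_intpoly e.
Qed.

Lemma nonatomic_size (R : {poly int}) : irreducibleZ R -> ~ QM_atomic (QM_of_intpoly R) ->
  (1 < size R)%N.
Proof.
move=> [R0 _ _] na; rewrite ltnNge; apply/negP => sR; apply: na.
exact: small_atomic.
Qed.

Lemma red_not_irr (R q r : {poly int}) : R = q * r -> (1 < size q)%N -> (1 < size r)%N ->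
  ~ irreducibleZ R.
Proof.
move=> e sq sr [_ _ /(_ _ _ e) [/unitZ_size h|/unitZ_size h]].
  by rewrite h in sq.
by rewrite h in sr.
Qed.

Lemma step_ex R : Inv R -> exists R', Step R R' /\ Inv R'.
Proof.
move=> [na [irr|[q [r [iq ir e sq sr]]]]].
  exists (R \Po 'X^2); split; first by split.
  split; first exact: lift_nonatomic.
  have sR := nonatomic_size irr na.
  case: (classic (irreducibleZ (R \Po 'X^2))) => h; first by left.
  by right; apply: two_factor.
have nR := red_not_irr e sq sr.
have : ~ QM_atomic (QM_of_intpoly q) \/ ~ QM_atomic (QM_of_intpoly r).
  apply: NNPP => H; apply: na.
  rewrite e; apply: (QM_atomic_eq (QM_eq_sym (QM_of_mul q r))).
  apply: QM_atomic_mul; try exact: nonunit_of.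
    by apply: NNPP => h; apply: H; left.
  by apply: NNPP => h; apply: H; right.
case=> [nq|nr].
  exists q; split; last by split => //; left.
  by split => // _; exists q, r.
exists r; split; last by split => //; left.
by split => // _; exists r, q; split => //; rewrite mulrC.
Qed.

Theorem proposition4p5 (P : {poly int}) :
  irreducibleZ P -> ~ QM_atomic (QM_of_intpoly P) ->
  exists Ps : nat -> {poly int},
    splitting_sequence P Ps /\
    (forall N : nat, exists n : nat, (N <= n)%N /\ letter_is_S Ps n).
Proof.
move=> irrP naP.
have ex : forall R, exists R', Inv R -> Step R R' /\ Inv R'.
  move=> R; case: (classic (Inv R)) => h.
    by case: (step_ex h) => R' hR'; exists R'.
  by exists R.
pose next R := proj1_sig (constructive_indefinite_description _ (ex R)).
pose Ps n := iter n next P.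
have invn : forall n, Inv (Ps n).
  elim=> [|n IH]; first by split => //; left.
  by rewrite /Ps iterS; case: (proj2_sig (constructive_indefinite_description _ (ex (Ps n))) IH).
have stepn : forall n, Step (Ps n) (Ps n.+1).
  by move=> n; rewrite /Ps iterS; case: (proj2_sig (constructive_indefinite_description _ (ex (Ps n))) (invn n)).
exists Ps; split; first by split.
move=> N; apply: NNPP => H.
have allirr : forall k, irreducibleZ (Ps (N + k)%N).
  move=> k; apply: NNPP => h; apply: H; exists (N + k)%N; split => //; exact: leq_addr.
have lifts : forall k, Ps (N + k)%N = Ps N \Po 'X^(2 ^ k).
  elim=> [|k IH]; first by rewrite addn0 expn0 expr1 comp_polyXr.
  rewrite addnS ((stepn (N + k)).1 (allirr k)) IH -comp_polyA comp_Xn_poly -exprM.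
  by rewrite expnS mulnC.
case: (invn N) => na _; apply: na; apply: allirr_atomic => k.
rewrite -lifts; exact: allirr.
Qed.
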